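(* Let $n\ge2$, let $r_1,\dots,r_n$ be nonzero rationals, and let $R(x_1,\dots,x_n,z)$ be a definable relation such that for every linearly independent tuple $a_1,\dots,a_n\in\mathcal M$ and every $z$: $$R(\bar a,z)\iff z\in\Big\{r_1a_1+\sum_{i=2}^n s_ir_ia_i: s_2,\dots,s_n\in\{-1,1\}\Big\}.$$ Then the relation $z=x+y$ is definable by $\{R,\ z=\pm x\pm y\}$.
   Context: $\mathcal M$ denotes the $\mathbb Q$-vector space $\mathbb Q^{<\omega}$ of all sequences of rationals with only finitely many nonzero terms, with zero vector $\vec 0$. A relation is definable if it is first-order definable without parameters in $\langle\mathcal M;+\rangle$; a relation is definable by $\Sigma$ if it is first-order definable without parameters in $\langle\mathcal M;\Sigma\rangle$. The relation $z=\pm x\pm y$ is $\{(x,y,z): z\in\{x+y,x-y,-x+y,-x-y\}\}$. *)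

(* Defs.v *)
From HB Require Import structures.
From mathcomp Require Import all_boot all_order all_algebra.
Set Implicit Arguments. Unset Strict Implicit. Unset Printing Implicit Defensive.
Import Order.TTheory GRing.Theory Num.Theory.
Local Open Scope ring_scope.

(** * The structure M = Q^{<omega}: rational sequences with finite support *)
Record M := MkM { mval : nat -> rat ;
                  mfin : exists N : nat, forall k : nat, (N <= k)%N -> mval k = 0 }.

Definition meq (x y : M) : Prop := forall k, mval x k = mval y k.

Definition plusR (x y z : M) : Prop := forall k, mval z k = mval x k + mval y k.

Definition pmR (x y z : M) : Prop :=
  exists e1 e2 : rat, (e1 = 1 \/ e1 = -1) /\ (e2 = 1 \/ e2 = -1) /\
    forall k, mval z k = e1 * mval x k + e2 * mval y k.

Definition lin_indep (n : nat) (a : 'I_n -> M) : Prop :=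
  forall c : 'I_n -> rat,
    (forall k, \sum_(i < n) c i * mval (a i) k = 0) -> forall i, c i = 0.

Section FOL.
Variable (L : Type) (ar : L -> nat).

Inductive formula : Type :=
  | FEq  : nat -> nat -> formula
  | FRel : forall s : L, ('I_(ar s) -> nat) -> formula
  | FNot : formula -> formula
  | FAnd : formula -> formula -> formula
  | FEx  : nat -> formula -> formula.

Variable (D : Type) (I : forall s : L, ('I_(ar s) -> D) -> Prop).

Definition upd (env : nat -> D) (x : nat) (d : D) : nat -> D :=
  fun y => if y == x then d else env y.

Fixpoint holds (env : nat -> D) (phi : formula) : Prop :=
  match phi with
  | FEq x y => env x = env y
  | FRel s args => I (fun j => env (args j))
  | FNot p => ~ holds env p
  | FAnd p q => holds env p /\ holds env q
  | FEx x p => exists d : D, holds (upd env x d) p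
  end.

(** a k-ary relation P on D is first-order definable without parameters:
    some formula whose free variables are among 0..k-1 defines it *)
Definition definable (k : nat) (P : ('I_k -> D) -> Prop) : Prop :=
  exists phi : formula, forall env : nat -> D,
    P (fun i : 'I_k => env (val i)) <-> holds env phi.
End FOL.

(** Structure <M; +> : one ternary symbol interpreted as the graph of + *)
Definition plus_ar (_ : unit) : nat := 3.
Definition plus_I (s : unit) (t : 'I_(plus_ar s) -> M) : Prop :=
  plusR (t (inord 0)) (t (inord 1)) (t (inord 2)).

Definition definable_plus (k : nat) (P : ('I_k -> M) -> Prop) : Prop :=
  definable plus_I P.

(** Structure <M; R, z = +-x +-y> where R is (n+1)-ary *)
Definition RS_ar (n : nat) (b : bool) : nat := if b then n.+1 else 3.
Definition RS_I (n : nat) (R : ('I_n.+1 -> M) -> Prop) (b : bool) :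
  ('I_(RS_ar n b) -> M) -> Prop :=
  match b return ('I_(RS_ar n b) -> M) -> Prop with
  | true => R
  | false => fun t => pmR (t (inord 0)) (t (inord 1)) (t (inord 2))
  end.

Definition snoc_tuple (n : nat) (a : 'I_n -> M) (z : M) : 'I_n.+1 -> M :=
  fun j => match unlift ord_max j with Some i => a i | None => z end.

Definition plus_rel (t : 'I_3 -> M) : Prop :=
  plusR (t (inord 0)) (t (inord 1)) (t (inord 2)).

(* Main.v *)
Require Import Defs.
From HB Require Import structures.
From mathcomp Require Import all_boot all_order all_algebra.
From mathcomp Require Import ring lra zify.
From Stdlib Require Import FunctionalExtensionality ProofIrrelevance Classical.
Import Order.TTheory GRing.Theory Num.Theory.
Local Open Scope ring_scope.

Lemma M_ext (x y : M) : (forall k, mval x k = mval y k) -> x = y.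
Proof.
case: x y => [fx hx] [fy hy] /= H.
have E : fx = fy by apply: functional_extensionality.
subst fy. by rewrite (proof_irrelevance _ hx hy).
Qed.

Definition zeroM : M := @MkM (fun _ => 0) (ex_intro _ 0%N (fun _ _ => erefl)).

Lemma lc_fin (a b : rat) (x y : M) :
  exists N : nat, forall k : nat, (N <= k)%N -> a * mval x k + b * mval y k = 0.
Proof.
case: (mfin x) => N1 H1; case: (mfin y) => N2 H2.
exists (maxn N1 N2) => k hk.
rewrite H1 ?H2 ?mulr0 ?addr0 //.
- by apply: leq_trans hk; rewrite leq_maxr.
- by apply: leq_trans hk; rewrite leq_maxl.
Qed.

Definition lcM (a b : rat) (x y : M) : M := MkM (lc_fin a b x y).

Lemma e_fin (N : nat) : exists N' : nat, forall k : nat, (N' <= k)%N ->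
  (if k == N then 1 else 0 : rat) = 0.
Proof.
exists N.+1 => k hk; case: eqP => // E; subst; by rewrite ltnn in hk.
Qed.

Definition eM (N : nat) : M := MkM (e_fin N).

Lemma bound_list (P : seq M) : exists N, forall p, List.In p P -> forall k, (N <= k)%N -> mval p k = 0.
Proof.
elim: P => [|p P [N HN]]; first by exists 0%N.
case: (mfin p) => N1 H1.
exists (maxn N N1) => q /= [<-|Hq] k hk.
- by apply: H1; apply: leq_trans hk; rewrite leq_maxr.
- by apply: HN => //; apply: leq_trans hk; rewrite leq_maxl.
Qed.

Definition isZ (v : M) := forall i, mval v i = 0.
Definition pmS (k : nat) (u v : M) := exists s : rat, (s = 1 \/ s = -1) /\
   forall i, mval v i = s * k%:R * mval u i.

Lemma natS1 (k : nat) : (k.+1)%:R = k%:R + 1 :> rat.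
Proof. by rewrite -addn1 natrD. Qed.

Lemma nonzero_coord (u : M) : ~ isZ u -> exists i, mval u i != 0.
Proof. move=> H; apply: NNPP => H2; apply: H => i; apply: NNPP => H3; apply: H2; exists i; by apply/eqP. Qed.

Lemma pmS_step k (u v : M) :
  ((exists d, pmS k.+1 u d /\ pmR u d v) /\ ~ (pmS k u v /\ ~ isZ u)) <-> pmS k.+2 u v.
Proof.
have K0 : 0 <= k%:R :> rat by apply: ler0n.
split.
- move=> [[d [[s [hs Hd]] [e1 [e2 [h1 [h2 Hv]]]]]] Hn].
  case: (classic (isZ u)) => Hz.
  + exists 1; split; first by left. by move=> i; rewrite Hv Hd Hz; ring.
  + have Hc : forall i, mval v i = (e1 + e2 * s * (k.+1)%:R) * mval u i.
      by move=> i; rewrite Hv Hd; ring.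
    rewrite natS1 in Hc.
    case: h1 hs h2 Hc => ->; case => ->; case => -> Hc.
    * exists 1; split; first by left. by move=> i; rewrite Hc !natS1; ring.
    * exfalso; apply: Hn; split=> //; exists (-1); split; first by right. by move=> i; rewrite Hc; ring.
    * exfalso; apply: Hn; split=> //; exists (-1); split; first by right. by move=> i; rewrite Hc; ring.
    * exists 1; split; first by left. by move=> i; rewrite Hc !natS1; ring.
    * exfalso; apply: Hn; split=> //; exists 1; split; first by left. by move=> i; rewrite Hc; ring.
    * exists (-1); split; first by right. by move=> i; rewrite Hc !natS1; ring.
    * exists (-1); split; first by right. by move=> i; rewrite Hc !natS1; ring.
    * exfalso; apply: Hn; split=> //; exists 1; split; first by left. by move=> i; rewrite Hc; ring.
- move=> [s [hs Hv]]; split.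
  + exists (lcM (s * (k.+1)%:R) 0 u u); split.
    * exists s; split=> // i /=; ring.
    * exists s, 1; split=> //; split; first by left.
      move=> i /=; rewrite Hv !natS1; ring.
  + move=> [[t [ht Ht]] Hz]; case: (nonzero_coord _ Hz) => i Hi.
    have E : (s * (k.+2)%:R - t * k%:R) * mval u i = 0.
      by rewrite mulrBl -Hv -Ht subrr.
    move/eqP: E; rewrite mulf_eq0 (negbTE Hi) orbF subr_eq0 !natS1 => /eqP.
    by case: hs ht => ->; case => ->; lra.
Qed.
Definition scS (c : rat) (u v : M) := exists s : rat, (s = 1 \/ s = -1) /\
   forall i, mval v i = s * c * mval u i.

Lemma sc_compose (A B : nat) (u v : M) : (0 < A)%N ->
  (exists w, pmS A w u /\ pmS B w v) <-> scS (B%:R / A%:R) u v.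
Proof.
move=> hA; have hA' : A%:R != 0 :> rat by rewrite pnatr_eq0 -lt0n.
split.
- move=> [w [[s [hs Hu]] [t [ht Hv]]]]; exists (s * t); split.
  + by case: hs ht => ->; case=> ->; [left|right|right|left]; ring.
  + by move=> i; rewrite Hv Hu; case: hs => ->; field.
- move=> [s [hs Hv]]; exists (lcM (1 / A%:R) 0 u u); split.
  + exists 1; split; first by left. by move=> i /=; field.
  + exists s; split; first by []. by move=> i /=; rewrite Hv; field.
Qed.
Definition nice (c : M) (P : seq M) :=
  exists K, mval c K != 0 /\ forall p, List.In p P -> mval p K = 0.

Definition LargeS (Q : M -> Prop) :=
  forall d, exists e e', pmR e e' d /\ Q e /\ Q e'.

Lemma large1 (P : seq M) (Q : M -> Prop) :
  (forall c, nice c P -> Q c) -> LargeS Q.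
Proof.
move=> H d; case: (bound_list (d :: P)) => N HN.
exists (eM N), (lcM 1 (-1) d (eM N)); split; [|split].
- exists 1, 1; split; first by left. split; first by left.
  by move=> i /=; ring.
- apply: H; exists N; split; first by rewrite /= eqxx oner_eq0.
  move=> p Hp; apply: HN => //; by right.
- apply: H; exists N; split.
  + rewrite /= eqxx; have -> : mval d N = 0 by apply: HN => //; left.
    by rewrite mulr0 add0r mulr1 oppr_eq0 oner_eq0.
  + move=> p Hp; apply: HN => //; by right.
Qed.

Lemma not_nice (c : M) (P : seq M) N :
  ~ nice c P -> (forall p, List.In p P -> mval p N = 0) -> mval c N = 0.
Proof.
move=> Hn HP; apply/eqP; apply: NNPP => H; apply: Hn; exists N; split=> //.
by apply/negP.
Qed.

Lemma large2 (P : seq M) (Q : M -> Prop) :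
  (forall c, nice c P -> ~ Q c) -> ~ LargeS Q.
Proof.
move=> H HL; case: (bound_list P) => N HN.
case: (HL (eM N)) => e [e' [[e1 [e2 [_ [_ Hd]]]] [Qe Qe']]].
have HP : forall p, List.In p P -> mval p N = 0 by move=> p Hp; apply: HN.
have z1 : mval e N = 0 by apply: (@not_nice e P N _ HP) => Hn; exact: (H e Hn Qe).
have z2 : mval e' N = 0 by apply: (@not_nice e' P N _ HP) => Hn; exact: (H e' Hn Qe').
move: (Hd N); rewrite /= eqxx z1 z2 !mulr0 addr0 => /eqP; by rewrite oner_eq0.
Qed.
Definition ind2 (a b : M) := forall al be : rat,
  (forall k, al * mval a k + be * mval b k = 0) -> al = 0 /\ be = 0.
Definition vanW (P : seq M) (v : nat -> rat) :=
  forall K, (forall p, List.In p P -> mval p K = 0) -> v K = 0.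
Definition inspanF (cs : seq M) (v : nat -> rat) :=
  exists mu : nat -> rat, forall k, v k = \sum_(j < size cs) mu j * mval (nth zeroM cs j) k.
Fixpoint niceSeq (P : seq M) (cs : seq M) : Prop :=
  match cs with
  | [::] => True
  | c :: cs' => nice c P /\ niceSeq (rcons P c) cs'
  end.

Lemma In_rcons (P : seq M) c p : List.In p (rcons P c) <-> List.In p P \/ p = c.
Proof.
rewrite -cats1 List.in_app_iff /=; split.
- by case=> [|[|[]]]; auto.
- by case; auto.
Qed.


Lemma nice_scal c P (al : rat) : nice c P -> (forall k, al * mval c k = 0) -> al = 0.
Proof.
move=> [K [hK _]] H; move/eqP: (H K); rewrite mulf_eq0 (negbTE hK) orbF.
by move/eqP.
Qed.

Lemma span_van0 cs : forall P v, niceSeq P cs -> inspanF cs v -> vanW P v -> forall k, v k = 0.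
Proof.
elim: cs => [|c cs IH] P v /=.
- by move=> _ [mu H] _ k; rewrite H big_ord0.
- move=> [nc ns] [mu H] hv.
  pose w k := v k - mu 0%N * mval c k.
  have Hw : forall k, w k = 0.
    apply: (IH (rcons P c)) => //.
    + exists (fun j => mu j.+1) => k; rewrite /w H big_ord_recl /=; ring.
    + move=> K HK; rewrite /w hv; last by move=> p Hp; apply: HK; apply/In_rcons; left.
      by rewrite (HK c); [ring|apply/In_rcons; right].
  have Hv : forall k, v k = mu 0%N * mval c k by move=> k; move: (Hw k); rewrite /w => /eqP; rewrite subr_eq0 => /eqP.
  case: nc => K [hK hP].
  have Z : mu 0%N * mval c K = 0 by rewrite -Hv; apply: hv.
  move/eqP: Z; rewrite mulf_eq0 (negbTE hK) orbF => /eqP Z.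
  by move=> k; rewrite Hv Z mul0r.
Qed.

Lemma span_indep cs : forall P (mu : nat -> rat), niceSeq P cs ->
  (forall k, \sum_(j < size cs) mu j * mval (nth zeroM cs j) k = 0) ->
  forall j, (j < size cs)%N -> mu j = 0.
Proof.
elim: cs => [|c cs IH] P mu //= [nc ns] H.
have Hrest : forall k, \sum_(j < size cs) mu j.+1 * mval (nth zeroM cs j) k = 0.
  apply: (@span_van0 cs (rcons P c) (fun k => \sum_(j < size cs) mu j.+1 * mval (nth zeroM cs j) k) ns).
  - by exists (fun j => mu j.+1).
  - move=> K HK.
    have cK : mval c K = 0 by apply: HK; apply/In_rcons; right.
    move: (H K); rewrite big_ord_recl /= cK mulr0 add0r; done.
have H0 : mu 0%N = 0.
  apply: (@nice_scal c P _ nc) => k; move: (H k); rewrite big_ord_recl /= Hrest addr0; done.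
case=> [|j] hj //; apply: (IH (rcons P c) (fun j => mu j.+1)) => //.
Qed.
Lemma sum_dec m (F : 'I_m.+2 -> rat) :
  \sum_(i < m.+2) F i = F ord0 + F (lift ord0 ord0) + \sum_(j < m) F (lift ord0 (lift ord0 j)).
Proof. by rewrite big_ord_recl big_ord_recl addrA. Qed.

Lemma tuple_indep m (a b : M) cs P : size cs = m -> ind2 a b -> vanW P (mval a) -> vanW P (mval b) ->
  niceSeq P cs -> lin_indep (fun i : 'I_m.+2 => nth zeroM (a :: b :: cs) i).
Proof.
move=> hs hab va vb ns c Hc.
have Hc' : forall k, c ord0 * mval a k + c (lift ord0 ord0) * mval b k +
    \sum_(j < size cs) (c (inord j.+2)) * mval (nth zeroM cs j) k = 0.
  move=> k; rewrite -[RHS](Hc k) sum_dec; congr (_ + _).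
  rewrite hs; apply: eq_bigr => j _; congr (c _ * _).
  by apply: val_inj; rewrite /= inordK // !ltnS.
have Z : forall k, c ord0 * mval a k + c (lift ord0 ord0) * mval b k = 0.
  have := @span_van0 cs P (fun k => c ord0 * mval a k + c (lift ord0 ord0) * mval b k) ns.
  apply.
  - exists (fun j => - c (inord j.+2)) => k.
    have := Hc' k; move/eqP; rewrite addr_eq0 => /eqP ->.
    by rewrite -sumrN; apply: eq_bigr => j _; rewrite mulNr.
  - by move=> K HK; rewrite va // vb // !mulr0 addr0.
case: (hab _ _ Z) => c0 c1.
have Hs : forall k, \sum_(j < size cs) (c (inord j.+2)) * mval (nth zeroM cs j) k = 0.
  by move=> k; move: (Hc' k); rewrite Z add0r.
have Hm := @span_indep cs P (fun j => c (inord j.+2)) ns Hs.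
move=> i; case: i => [[|[|j]] hi].
- by rewrite -c0; congr c; apply: val_inj.
- by rewrite -c1; congr c; apply: val_inj.
- have hj : (j < size cs)%N by rewrite hs.
  rewrite -(Hm j hj); congr c; apply: val_inj; by rewrite /= inordK.
Qed.
Fixpoint combM (mu : nat -> rat) (cs : seq M) : M :=
  match cs with
  | [::] => zeroM
  | c :: cs' => lcM (mu 0%N) 1 c (combM (fun j => mu j.+1) cs')
  end.

Lemma combME cs : forall mu k, mval (combM mu cs) k =
  \sum_(j < size cs) mu j * mval (nth zeroM cs j) k.
Proof.
elim: cs => [|c cs IH] mu k /=; first by rewrite big_ord0.
by rewrite big_ord_recl IH /= mul1r.
Qed.

Lemma ind2_sym a b : ind2 a b -> ind2 b a.
Proof. move=> H al be Hk; case: (H be al) => // k; by rewrite addrC. Qed.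

Lemma ind2_scal a b b' (c : rat) : ind2 a b -> c != 0 -> (forall k, mval b' k = c * mval b k) -> ind2 a b'.
Proof.
move=> H hc hb al be Hk; case: (H al (be * c)).
- by move=> k; rewrite -(Hk k) hb mulrA.
- move=> -> /eqP; rewrite mulf_eq0 (negbTE hc) orbF => /eqP ->; by split.
Qed.

Lemma nice_ind2 a c P : ~ isZ a -> nice c P -> List.In a P -> ind2 a c.
Proof.
move=> ha [K [hK hP]] hin al be Hk.
have be0 : be = 0.
  by move: (Hk K); rewrite (hP a hin) mulr0 add0r => /eqP; rewrite mulf_eq0 (negbTE hK) orbF => /eqP.
split=> //; case: (nonzero_coord _ ha) => i hi.
by move: (Hk i); rewrite be0 mul0r addr0 => /eqP; rewrite mulf_eq0 (negbTE hi) orbF => /eqP.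
Qed.

Lemma ind2_nzl a b : ind2 a b -> ~ isZ a.
Proof. move=> H Z; case: (H 1 0) => [k|]; [by rewrite Z mul0r mulr0 addr0|move/eqP; by rewrite oner_eq0]. Qed.
Lemma ind2_nzsum a b : ind2 a b -> ~ (forall k, mval a k + mval b k = 0).
Proof. move=> H Z; case: (H 1 1) => [k|]; [by rewrite !mul1r Z|move/eqP; by rewrite oner_eq0]. Qed.

Lemma scS_opp c u v : scS (- c) u v <-> scS c u v.
Proof.
split=> -[s [hs H]]; exists (- s); (split; [by case: hs => ->; [right|left]; rewrite ?opprK|]);
  by move=> i; rewrite H; ring.
Qed.

Fixpoint LNS (m : nat) (S : seq M -> Prop) (cs : seq M) : Prop :=
  match m with
  | 0 => S cs
  | m'.+1 => LargeS (fun c => LNS m' S (rcons cs c))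
  end.

Lemma LN_correct (P : seq M) (S : seq M -> Prop) (T : Prop) m : forall cs,
  (forall cs', size cs' = m -> niceSeq (P ++ cs) cs' -> (S (cs ++ cs') <-> T)) ->
  (LNS m S cs <-> T).
Proof.
elim: m => [|m IH] cs H /=.
- by rewrite -(cats0 cs); apply: H.
- have Hc : forall c, nice c (P ++ cs) -> (LNS m S (rcons cs c) <-> T).
    move=> c nc; apply: IH => cs' hs ns.
    rewrite cat_rcons; apply: H; first by rewrite /= hs.
    by split=> //; rewrite rcons_cat.
  case: (classic T) => hT.
  + split=> // _; apply: (@large1 (P ++ cs) (fun c => LNS m S (rcons cs c))) => c nc; exact/Hc.
  + split=> [HL|//]; exfalso; apply: (@large2 (P ++ cs) (fun c => LNS m S (rcons cs c))) => // c nc.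
    by rewrite Hc.
Qed.

Lemma rat_frac (c : rat) : exists A B : nat, (0 < A)%N /\ (B%:R / A%:R = c \/ B%:R / A%:R = - c).
Proof.
exists `|denq c|%N, `|numq c|%N; split; first by rewrite absz_gt0 denq_neq0.
rewrite !natr_absz (gtr0_norm (denq_gt0 c)).
have E := divq_num_den c.
case: (ltrP (numq c) 0) => h; [right|left].
- by rewrite (ltr0_norm h) -[in RHS]E mulrNz mulNr.
- by rewrite (ger0_norm h) -[in RHS]E.
Qed.
Lemma inspanF_lc cs u v (al be : rat) : inspanF cs u -> inspanF cs v ->
  inspanF cs (fun k => al * u k + be * v k).
Proof.
move=> [mu Hu] [nu Hv]; exists (fun j => al * mu j + be * nu j) => k.
rewrite Hu Hv !mulr_sumr -big_split /=; apply: eq_bigr => j _; ring.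
Qed.

Lemma inspanF_ext cs u v : (forall k, u k = v k) -> inspanF cs v -> inspanF cs u.
Proof. move=> E [mu H]; exists mu => k; by rewrite E H. Qed.

Section Core.
Variable m : nat.
Variable r : 'I_m.+2 -> rat.
Hypothesis hr : forall i, r i != 0.
Variable R : ('I_m.+3 -> M) -> Prop.
Hypothesis hR : forall a : 'I_m.+2 -> M, lin_indep a -> forall z : M,
      R (snoc_tuple a z) <->
      exists s : 'I_m.+2 -> rat,
        (forall i : 'I_m.+2, (0 < val i)%N -> s i = 1 \/ s i = -1) /\
        forall k, mval z k =
          \sum_(i < m.+2) (if val i == 0%N then 1 else s i) * r i * mval (a i) k.

Notation F := (formula (RS_ar m.+2)).
Notation hl := (holds (RS_I R)).

Lemma upd_eq (env : nat -> M) x d : upd env x d x = d.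
Proof. by rewrite /upd eqxx. Qed.
Lemma upd_neq (env : nat -> M) x d y : y != x -> upd env x d y = env y.
Proof. by rewrite /upd => /negbTE ->. Qed.

Lemma upd_lt (env : nat -> M) x d y : (y < x)%N -> upd env x d y = env y.
Proof. by move=> h; rewrite upd_neq // neq_ltn h. Qed.

Definition fPm (a b c : nat) : F := @FRel _ (RS_ar m.+2) false (fun j : 'I_3 => nth 0%N [:: a; b; c] j).
Lemma fPmE env a b c : hl env (fPm a b c) <-> pmR (env a) (env b) (env c).
Proof. by rewrite /= !inordK. Qed.

Definition fR (l : seq nat) (z : nat) : F :=
  @FRel _ (RS_ar m.+2) true (fun j : 'I_m.+3 => nth 0%N (rcons l z) j).
Lemma fRE env l z : hl env (fR l z) <-> R (fun j => env (nth 0%N (rcons l z) j)).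
Proof. by []. Qed.

Definition fOr (p q : F) : F := FNot (FAnd (FNot p) (FNot q)).
Definition fAll x (p : F) : F := FNot (FEx x (FNot p)).
Lemma fOrE env p q : hl env (fOr p q) <-> hl env p \/ hl env q.
Proof. rewrite /=; split; [apply: NNPP => H; apply H => -[]; tauto | tauto]. Qed.
Lemma fAllE env x p : hl env (fAll x p) <-> forall d, hl (upd env x d) p.
Proof. rewrite /=; split.
- move=> H d; apply: NNPP => Hn; apply: H; by exists d.
- move=> H [d]; apply; exact: H.
Qed.

Definition fZero o := fPm o o o.
Lemma fZeroE env o : hl env (fZero o) <-> isZ (env o).
Proof.
rewrite fPmE; split.
- move=> [e1 [e2 [h1 [h2 H]]]] i; move: (H i).
  by case: h1 => ->; case: h2 => -> Hi; lra.
- move=> H; exists 1, 1; split; [by left|split; [by left|]].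
  by move=> i; rewrite H; ring.
Qed.
Fixpoint fMk (k f u v : nat) : F :=
  match k with
  | 0 => fZero v
  | 1 => FEx f (FAnd (fZero f) (fPm u f v))
  | S (S k' as k1) => FAnd (FEx f (FAnd (fMk k1 f.+1 u f) (fPm u f v)))
                          (FNot (FAnd (fMk k' f u v) (FNot (fZero u))))
  end.

Lemma fMkE_aux k : (forall f u v env, (u < f)%N -> (v < f)%N ->
     (hl env (fMk k f u v) <-> pmS k (env u) (env v))) /\
   (forall f u v env, (u < f)%N -> (v < f)%N ->
     (hl env (fMk k.+1 f u v) <-> pmS k.+1 (env u) (env v))).
Proof.
elim: k => [|k [IH1 IH2]].
- split => f u v env hu hv.
  + rewrite fZeroE; split.
    * move=> H; exists 1; split; first by left. by move=> i; rewrite H mulr0 mul0r.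
    * by move=> [s [_ H]] i; rewrite H mulr0 mul0r.
  + have nu : u != f by rewrite neq_ltn hu.
    have nv : v != f by rewrite neq_ltn hv.
    split.
    * move=> [d [Hd Hp]]; move/fZeroE: Hd; rewrite upd_eq => Hd.
      move/fPmE: Hp; rewrite upd_eq !upd_neq //.
      move=> [e1 [e2 [h1 [_ H]]]]; exists e1; split=> // i.
      by rewrite H Hd; ring.
    * move=> [s [hs H]]; exists zeroM; split; first by apply/fZeroE; rewrite upd_eq.
      apply/fPmE; rewrite upd_eq !upd_neq //; exists s, 1; split=> //; split; first by left.
      by move=> i; rewrite H /=; ring.
- split; first exact: IH2.
  move=> f u v env hu hv.
  have nu : u != f by rewrite neq_ltn hu.
  have nv : v != f by rewrite neq_ltn hv.
  rewrite -pmS_step; change (hl env (fMk k.+2 f u v)) with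
   ((exists d, hl (upd env f d) (fMk k.+1 f.+1 u f) /\ hl (upd env f d) (fPm u f v)) /\
    ~ (hl env (fMk k f u v) /\ ~ hl env (fZero u))).
  rewrite IH1 // fZeroE.
  have E : forall d, (hl (upd env f d) (fMk k.+1 f.+1 u f) /\ hl (upd env f d) (fPm u f v))
      <-> (pmS k.+1 (env u) d /\ pmR (env u) d (env v)).
    move=> d; rewrite IH2 ?fPmE ?upd_eq ?upd_neq //; exact: ltnW.
  split; move=> [[d Hd] H2]; split=> //; exists d; by apply/E.
Qed.

Lemma fMkE k f u v env : (u < f)%N -> (v < f)%N ->
     (hl env (fMk k f u v) <-> pmS k (env u) (env v)).
Proof. by case: (fMkE_aux k) => H _; apply: H. Qed.
Definition fSc (A B f u v : nat) : F := FEx f (FAnd (fMk A f.+1 f u) (fMk B f.+1 f v)).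
Lemma fScE A B f u v env : (0 < A)%N -> (u < f)%N -> (v < f)%N ->
  (hl env (fSc A B f u v) <-> scS (B%:R / A%:R) (env u) (env v)).
Proof.
move=> hA hu hv; rewrite -sc_compose //.
have nu : u != f by rewrite neq_ltn hu.
have nv : v != f by rewrite neq_ltn hv.
have E : forall d, hl (upd env f d) (fMk A f.+1 f u) /\ hl (upd env f d) (fMk B f.+1 f v)
   <-> pmS A d (env u) /\ pmS B d (env v).
  by move=> d; rewrite !fMkE ?upd_eq ?upd_neq //; apply: ltnW.
by split; move=> [d Hd]; exists d; apply/E.
Qed.

Definition fLarge (f : nat) (body : nat -> nat -> F) : F :=
  fAll f (FEx f.+1 (FEx f.+2 (FAnd (fPm f.+1 f.+2 f) (FAnd (body f.+1 f.+3) (body f.+2 f.+3))))).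

Lemma fLargeE f body env (Q : M -> Prop) :
  (forall e, (e = f.+1 \/ e = f.+2) -> forall env', (forall y, (y < f)%N -> env' y = env y) ->
     (hl env' (body e f.+3) <-> Q (env' e))) ->
  (hl env (fLarge f body) <-> LargeS Q).
Proof.
move=> Hb; rewrite fAllE.
have E : forall d, hl (upd env f d) (FEx f.+1 (FEx f.+2 (FAnd (fPm f.+1 f.+2 f) (FAnd (body f.+1 f.+3) (body f.+2 f.+3)))))
   <-> exists e e', pmR e e' d /\ Q e /\ Q e'.
  move=> d; set env1 := upd env f d.
  have agr : forall e e' y, (y < f)%N -> upd (upd env1 f.+1 e) f.+2 e' y = env y.
    move=> e e' y hy; rewrite /env1 !upd_lt //.
    - by rewrite (ltn_trans hy).
    - by rewrite (ltn_trans hy) // ltnW.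
  have v1 : forall e e', upd (upd env1 f.+1 e) f.+2 e' f.+1 = e.
    by move=> e e'; rewrite upd_lt ?upd_eq.
  have v2 : forall e e', upd (upd env1 f.+1 e) f.+2 e' f.+2 = e'.
    by move=> e e'; rewrite upd_eq.
  have v0 : forall e e', upd (upd env1 f.+1 e) f.+2 e' f = d.
    by move=> e e'; rewrite !upd_lt // /env1 upd_eq.
  split.
  - move=> [e [e' [Hp [H1 H2]]]]; exists e, e'.
    move/fPmE: Hp; rewrite v1 v2 v0 => Hp; split=> //.
    move/(Hb _ (or_introl erefl) _ (agr e e')): H1; rewrite v1 => H1.
    move/(Hb _ (or_intror erefl) _ (agr e e')): H2; rewrite v2 => H2.
    by split.
  - move=> [e [e' [Hp [H1 H2]]]]; exists e, e'; split.
    + by apply/fPmE; rewrite v1 v2 v0.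
    split.
    + by apply/(Hb _ (or_introl erefl) _ (agr e e')); rewrite v1.
    + by apply/(Hb _ (or_intror erefl) _ (agr e e')); rewrite v2.
split => H d; move: (H d); by rewrite E.
Qed.

Fixpoint fLN (mm f : nat) (body : seq nat -> nat -> F) (acc : seq nat) : F :=
  match mm with
  | 0 => body acc f
  | mm'.+1 => fLarge f (fun e g => fLN mm' g body (rcons acc e))
  end.


Lemma fLNE (S : seq M -> Prop) f0 (env0 : nat -> M) body mfin :
  (forall acc g env', size acc = mfin -> (forall a, a \in acc -> (a < g)%N) -> (f0 <= g)%N ->
      (forall y, (y < f0)%N -> env' y = env0 y) ->
      (hl env' (body acc g) <-> S (map env' acc))) ->
  forall mm acc f env', (size acc + mm = mfin)%N -> (forall a, a \in acc -> (a < f)%N) -> (f0 <= f)%N ->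
      (forall y, (y < f0)%N -> env' y = env0 y) ->
      (hl env' (fLN mm f body acc) <-> LNS mm S (map env' acc)).
Proof.
move=> Hb; elim=> [|mm IH] acc f env' hsz ha hf he; first by apply: Hb => //; rewrite -hsz addn0.
change (hl env' (fLarge f (fun e g => fLN mm g body (rcons acc e))) <-> LargeS (fun c => LNS mm S (rcons (map env' acc) c))).
apply: (@fLargeE f _ env' (fun c => LNS mm S (rcons (map env' acc) c))) => e he' env'' agr.
have ltf : (f < e)%N.
  by case: he' => ->; [exact: ltnSn | exact: leqW (ltnSn f)].
have lte : (e < f.+3)%N.
  by case: he' => ->; [exact: leqnSn | exact: ltnSn].
have Em : map env'' (rcons acc e) = rcons (map env' acc) (env'' e).
  rewrite map_rcons; congr rcons; apply/eq_in_map => a /ha; exact: agr.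
rewrite (IH (rcons acc e) f.+3 env'') ?Em //.
- by rewrite size_rcons addSnnS.
- move=> a; rewrite mem_rcons in_cons => /orP[/eqP -> //|/ha haf].
  by apply: (ltn_trans haf); apply: (ltn_trans ltf).
- by apply: (leq_trans hf); apply: ltnW; apply: (ltn_trans ltf).
- move=> y hy; rewrite agr ?he //; exact: (leq_trans hy hf).
Qed.
Definition pp := r ord0.
Definition qq := r (lift ord0 ord0).
Definition rr (j : nat) := r (inord j).

Definition Rl (vs : seq M) (z : M) := R (fun j : 'I_m.+3 => nth zeroM (rcons vs z) j).

Lemma liftlift (j : 'I_m) : lift ord0 (lift ord0 j) = inord j.+2 :> 'I_m.+2.
Proof. by apply: val_inj; rewrite /= inordK // !ltnS. Qed.

Lemma snoc_nth (vs : seq M) z : size vs = m.+2 ->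
  (fun j : 'I_m.+3 => nth zeroM (rcons vs z) j) = snoc_tuple (fun i : 'I_m.+2 => nth zeroM vs i) z.
Proof.
move=> hs; apply: functional_extensionality => j; rewrite /snoc_tuple.
case: unliftP => [i ->|->].
- have hi : (i < m.+2)%N := ltn_ord i.
  rewrite nth_rcons hs /=.
  have -> : bump m.+2 i = i by rewrite /bump leqNgt hi.
  by rewrite hi.
- by rewrite nth_rcons hs /= ltnn eqxx.
Qed.

Lemma Rl3 a b cs z : size cs = m -> lin_indep (fun i : 'I_m.+2 => nth zeroM (a :: b :: cs) i) ->
  (Rl (a :: b :: cs) z <-> exists s1 : rat, exists sg : nat -> rat,
     (s1 = 1 \/ s1 = -1) /\ (forall j, sg j = 1 \/ sg j = -1) /\
     forall k, mval z k = pp * mval a k + s1 * qq * mval b k +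
        \sum_(j < size cs) sg j * rr j.+2 * mval (nth zeroM cs j) k).
Proof.
move=> hs hi; rewrite /Rl snoc_nth /=; last by rewrite hs.
rewrite hR //; split.
- move=> [s [hsg H]]; exists (s (lift ord0 ord0)), (fun j => if (j < m)%N then s (inord j.+2) else 1).
  split; first by apply: hsg.
  split.
    move=> j; case: ifP => hj; last by left.
    by apply: hsg; rewrite /= inordK.
  move=> k; rewrite H sum_dec /= mul1r; congr (_ + _).
  rewrite hs; apply: eq_bigr => j _; rewrite ltn_ord liftlift /rr //.
- move=> [s1 [sg [h1 [hsg H]]]].
  exists (fun i : 'I_m.+2 => if val i == 1%N then s1 else sg (val i - 2)%N); split.
  + move=> i hi0; case: eqP => _ //; apply: hsg.
  + move=> k; rewrite H sum_dec /= mul1r; congr (_ + _).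
    rewrite hs; apply: eq_bigr => j _; rewrite liftlift /rr add0n.
    by have -> : (bump 0 (bump 0 j) - 2)%N = j by rewrite /bump !add1n subn2.
Qed.

Variables A1 B1 A2 B2 : nat.
Hypothesis hA1 : (0 < A1)%N.
Hypothesis hA2 : (0 < A2)%N.
Hypothesis hc1 : B1%:R / A1%:R = pp / qq \/ B1%:R / A1%:R = - (pp / qq).
Hypothesis hc2 : B2%:R / A2%:R = 1 / (2 * pp) \/ B2%:R / A2%:R = - (1 / (2 * pp)).

Lemma scS_c1 u v : scS (B1%:R / A1%:R) u v <-> scS (pp / qq) u v.
Proof. by case: hc1 => ->; rewrite ?scS_opp. Qed.
Lemma scS_c2 u v : scS (B2%:R / A2%:R) u v <-> scS (1 / (2 * pp)) u v.
Proof. by case: hc2 => ->; rewrite ?scS_opp. Qed.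

Definition BS (x y s : M) (cs : seq M) := exists b w z1 z2 t,
  scS (B1%:R / A1%:R) y b /\ scS (B1%:R / A1%:R) x w /\
  Rl (x :: b :: cs) z1 /\ Rl (y :: w :: cs) z1 /\
  Rl (x :: b :: cs) z2 /\ Rl (y :: w :: cs) z2 /\
  pmR z1 z2 t /\ scS (B2%:R / A2%:R) t s.

Lemma pp_nz : pp != 0. Proof. exact: hr. Qed.
Lemma qq_nz : qq != 0. Proof. exact: hr. Qed.

Lemma N_span cs (sg : nat -> rat) :
  inspanF cs (fun k => \sum_(j < size cs) sg j * rr j.+2 * mval (nth zeroM cs j) k).
Proof. by exists (fun j => sg j * rr j.+2). Qed.

Lemma sc_facts P x y b : ind2 x y -> vanW P (mval y) -> scS (pp / qq) y b ->
  ind2 x b /\ vanW P (mval b) /\ exists sb, (sb = 1 \/ sb = -1) /\ forall k, qq * mval b k = sb * pp * mval y k.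
Proof.
move=> hxy vy [sb [hsb Hb]].
have nz : sb * (pp / qq) != 0.
  by rewrite mulf_neq0 // ?mulf_neq0 ?invr_neq0 ?pp_nz ?qq_nz //; case: hsb => ->; rewrite ?oppr_eq0 oner_eq0.
split; first by apply: (@ind2_scal x y b _ hxy nz) => k; rewrite Hb mulrA.
split; first by move=> K HK; rewrite Hb vy // mulr0.
exists sb; split=> // k; rewrite Hb; field; exact: qq_nz.
Qed.

Lemma zform P x y b w cs z : ind2 x y -> size cs = m -> vanW P (mval x) -> vanW P (mval y) ->
  niceSeq P cs -> scS (pp / qq) y b -> scS (pp / qq) x w ->
  Rl (x :: b :: cs) z -> Rl (y :: w :: cs) z ->
  exists N, inspanF cs N /\ forall k, mval z k = pp * (mval x k + mval y k) + N k.
Proof.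
move=> hxy hs vx vy ns sb sw.
have [ixb [vb [eb [heb Eb]]]] := @sc_facts P x y b hxy vy sb.
have [iyw [vw [ew [hew Ew]]]] := @sc_facts P y x w (@ind2_sym x y hxy) vx sw.
rewrite (@Rl3 x b cs z hs (@tuple_indep m x b cs P hs ixb vx vb ns)).
rewrite (@Rl3 y w cs z hs (@tuple_indep m y w cs P hs iyw vy vw ns)).
move=> [s1 [sg [hs1 [_ H1]]]] [t1 [tg [ht1 [_ H2]]]].
pose N1 := fun k => \sum_(j < size cs) sg j * rr j.+2 * mval (nth zeroM cs j) k.
pose N2 := fun k => \sum_(j < size cs) tg j * rr j.+2 * mval (nth zeroM cs j) k.
pose D k := (pp - t1 * ew * pp) * mval x k + (s1 * eb * pp - pp) * mval y k.
have ED : forall k, D k = 1 * N2 k + (-1) * N1 k.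
  move=> k.
  have e1 : t1 * qq * mval w k = t1 * ew * pp * mval x k by rewrite -[t1 * qq * _]mulrA Ew; ring.
  have e2 : s1 * qq * mval b k = s1 * eb * pp * mval y k by rewrite -[s1 * qq * _]mulrA Eb; ring.
  have E := H1 k; rewrite H2 e1 e2 in E.
  have H : D k - (1 * N2 k + (-1) * N1 k) = - ((pp * mval y k + t1 * ew * pp * mval x k + N2 k) - (pp * mval x k + s1 * eb * pp * mval y k + N1 k)).
    rewrite /D /N1 /N2; ring.
  move: H; rewrite E subrr oppr0 => /eqP; rewrite subr_eq0 => /eqP; done.
have D0 : forall k, D k = 0.
  apply: (@span_van0 cs P D ns); first by apply: (@inspanF_ext cs D _ ED); apply: inspanF_lc; apply: N_span.
  by move=> K HK; rewrite /D vx // vy // !mulr0 addr0.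
have [_ c2] := hxy _ _ D0.
exists N1; split; first exact: N_span.
move=> k; rewrite H1 -[s1 * qq * _]mulrA Eb.
have -> : s1 * (eb * pp * mval y k) = (s1 * eb * pp - pp) * mval y k + pp * mval y k by ring.
rewrite c2 /N1; ring.
Qed.
Lemma core x y s cs : ind2 x y -> size cs = m -> niceSeq [:: x; y; s] cs ->
  (BS x y s cs <-> scS 1 (lcM 1 1 x y) s \/ isZ s).
Proof.
move=> hxy hs ns.
have vx : vanW [:: x; y; s] (mval x) by move=> K HK; apply: HK; left.
have vy : vanW [:: x; y; s] (mval y) by move=> K HK; apply: HK; right; left.
have vs : vanW [:: x; y; s] (mval s) by move=> K HK; apply: HK; right; right; left.
have p0 := pp_nz.
split.
- move=> [b [w [z1 [z2 [t [hb [hw [r1 [r2 [r3 [r4 [hp ht]]]]]]]]]]]].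
  rewrite scS_c1 in hb; rewrite scS_c1 in hw; rewrite scS_c2 in ht.
  have [N1 [sN1 E1]] := @zform _ _ _ _ _ _ _ hxy hs vx vy ns hb hw r1 r2.
  have [N2 [sN2 E2]] := @zform _ _ _ _ _ _ _ hxy hs vx vy ns hb hw r3 r4.
  case: hp => e1 [e2 [he1 [he2 Ht]]].
  case: ht => sg [hsg Hs].
  pose c := sg * (e1 + e2) / 2.
  pose D k := mval s k - c * (mval x k + mval y k).
  have ED : forall k, D k = (sg / (2 * pp)) * (e1 * N1 k + e2 * N2 k) + 0 * N1 k.
    move=> k; rewrite /D Hs Ht E1 E2 /c; field; exact: p0.
  have D0 : forall k, D k = 0.
    apply: (@span_van0 cs _ D ns).
    + apply: (@inspanF_ext cs D _ ED); apply: inspanF_lc => //; exact: inspanF_lc.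
    + by move=> K HK; rewrite /D vs // vx // vy // addr0 mulr0 subr0.
  have Es : forall k, mval s k = c * (mval x k + mval y k).
    by move=> k; move: (D0 k); rewrite /D => /eqP; rewrite subr_eq0 => /eqP.
  case: he1 => ee1; case: he2 => ee2; rewrite /c ee1 ee2 in Es.
  + left; exists sg; split; first by []. by move=> k /=; rewrite Es; field.
  + by right => k; rewrite Es; field.
  + by right => k; rewrite Es; field.
  + left; exists (- sg); split; first by case: hsg => ->; rewrite ?opprK; [right|left].
    by move=> k /=; rewrite Es; field.
- have q0 := qq_nz.
  pose b := lcM (pp / qq) 0 y y.
  pose w := lcM (pp / qq) 0 x x.
  have hb : scS (pp / qq) y b by exists 1; split; [left|move=> k /=; ring].
  have hw : scS (pp / qq) x w by exists 1; split; [left|move=> k /=; ring].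
  have [ixb [vb _]] := @sc_facts _ x y b hxy vy hb.
  have [iyw [vw _]] := @sc_facts _ y x w (@ind2_sym x y hxy) vx hw.
  have Li1 := @tuple_indep m x b cs _ hs ixb vx vb ns.
  have Li2 := @tuple_indep m y w cs _ hs iyw vy vw ns.
  pose z1 := lcM 1 1 (lcM pp pp x y) (combM (fun j => rr j.+2) cs).
  pose z2 := lcM 1 1 (lcM pp pp x y) (combM (fun j => - rr j.+2) cs).
  have R1 : forall z, (forall k, mval z k = pp * mval x k + pp * mval y k +
          \sum_(j < size cs) 1 * rr j.+2 * mval (nth zeroM cs j) k) -> Rl (x :: b :: cs) z /\ Rl (y :: w :: cs) z.
    move=> z Hz; split.
    + apply/(@Rl3 x b cs z hs Li1); exists 1, (fun _ => 1); split; [by left|split; [by left|]].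
      by move=> k; rewrite Hz /=; field.
    + apply/(@Rl3 y w cs z hs Li2); exists 1, (fun _ => 1); split; [by left|split; [by left|]].
      by move=> k; rewrite Hz /=; field.
  have R2 : forall z, (forall k, mval z k = pp * mval x k + pp * mval y k +
          \sum_(j < size cs) (-1) * rr j.+2 * mval (nth zeroM cs j) k) -> Rl (x :: b :: cs) z /\ Rl (y :: w :: cs) z.
    move=> z Hz; split.
    + apply/(@Rl3 x b cs z hs Li1); exists 1, (fun _ => -1); split; [by left|split; [by right|]].
      by move=> k; rewrite Hz /=; field.
    + apply/(@Rl3 y w cs z hs Li2); exists 1, (fun _ => -1); split; [by left|split; [by right|]].
      by move=> k; rewrite Hz /=; field.
  have [Ra Rb] : Rl (x :: b :: cs) z1 /\ Rl (y :: w :: cs) z1.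
    apply: R1 => k; rewrite /= combME !mul1r; congr (_ + _).
    by apply: eq_bigr => j _; rewrite mul1r.
  have [Rc Rd] : Rl (x :: b :: cs) z2 /\ Rl (y :: w :: cs) z2.
    apply: R2 => k; rewrite /= combME !mul1r; congr (_ + _).
    by apply: eq_bigr => j _; rewrite mulN1r mulNr.
  case=> [[sg [hsg Hs]]|Hz].
  + exists b, w, z1, z2, (lcM 1 1 z1 z2).
    rewrite !scS_c1 scS_c2; do 6!(split=> //).
    split; first by exists 1, 1; split; [left|split; [left|move=> k /=]].
    exists sg; split=> // k; rewrite Hs /= !combME.
    have -> : \sum_(j < size cs) - rr j.+2 * mval (nth zeroM cs j) k =
              - \sum_(j < size cs) rr j.+2 * mval (nth zeroM cs j) k.
      by rewrite -sumrN; apply: eq_bigr => j _; rewrite mulNr.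
    field; exact: p0.
  + exists b, w, z1, z1, zeroM.
    rewrite !scS_c1 scS_c2; do 6!(split=> //).
    split; first by exists 1, (-1); split; [left|split; [right|move=> k /=; ring]].
    by exists 1; split; [left|move=> k; rewrite Hz /=; ring].
Qed.
Definition PM2S x y s := ~ isZ s /\ LNS m (BS x y s) [::].

Lemma PM2_correct x y s : ind2 x y -> (PM2S x y s <-> scS 1 (lcM 1 1 x y) s).
Proof.
move=> hxy; rewrite /PM2S.
rewrite (@LN_correct [:: x; y; s] (BS x y s) (scS 1 (lcM 1 1 x y) s \/ isZ s) m [::]).
- split; first by case=> Hz [//|].
  move=> H; split; last by left.
  move=> Hz; case: H => sg [hsg Hs]; apply: (@ind2_nzsum x y hxy) => k.
  have := Hs k; rewrite Hz /= => /esym /eqP; rewrite !mul1r mulf_eq0.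
  by case: hsg => ->; rewrite ?mulr1 ?oppr_eq0 oner_eq0 /= => /eqP.
- move=> cs' hs ns; rewrite cats0 in ns; exact: core.
Qed.

Lemma ind2_sx x y s (sg : rat) : ind2 x y -> (sg = 1 \/ sg = -1) ->
  (forall k, mval s k = sg * (mval x k + mval y k)) -> ind2 s x.
Proof.
move=> hxy hsg Hs al be H.
have nz : sg != 0 by case: hsg => ->; rewrite ?oppr_eq0 oner_eq0.
case: (hxy (al * sg + be) (al * sg)).
- by move=> k; rewrite -(H k) Hs; ring.
- move=> h1 /eqP; rewrite mulf_eq0 (negbTE nz) orbF => /eqP a0.
  by move: h1; rewrite a0 mul0r add0r.
Qed.

Definition PlusIS x y s := PM2S x y s /\ ~ PM2S s x y.

Lemma PlusI_correct x y s : ind2 x y -> (PlusIS x y s <-> forall k, mval s k = mval x k + mval y k).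
Proof.
move=> hxy; rewrite /PlusIS (@PM2_correct x y s hxy).
have hy := @ind2_nzl y x (@ind2_sym x y hxy).
split.
- move=> [[sg [hsg Hs]] Hn].
  have Hs' : forall k, mval s k = sg * (mval x k + mval y k) by move=> k; rewrite Hs /=; ring.
  have hsx := @ind2_sx x y s sg hxy hsg Hs'.
  rewrite (@PM2_correct s x y hsx) in Hn.
  case: hsg => e; last first.
    exfalso; apply: Hn; exists (-1); split; first by right.
    by move=> k /=; rewrite Hs' e; ring.
  by move=> k; rewrite Hs' e; ring.
- move=> Hs.
  have Hs' : forall k, mval s k = 1 * (mval x k + mval y k) by move=> k; rewrite Hs; ring.
  have hsx := @ind2_sx x y s 1 hxy (or_introl erefl) Hs'.
  split; first by exists 1; split; [left|move=> k /=; rewrite Hs; ring].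
  rewrite (@PM2_correct s x y hsx) => -[t [ht Ht]].
  case: (hxy (- 2 * t) (1 - t)).
  + move=> k; have := Ht k; rewrite /= Hs => E.
    have -> : - 2 * t * mval x k + (1 - t) * mval y k =
       mval y k - t * 1 * (1 * (mval x k + mval y k) + 1 * mval x k) by ring.
    by rewrite -E subrr.
  + by case: ht => -> /eqP; rewrite ?mulrN ?opprK mulr1 ?oppr_eq0.
Qed.

Definition NegS (x y : M) := (exists o, isZ o /\ pmR x y o) /\ ~ (x = y /\ ~ isZ x).

Definition ThetaS x y s u := exists v t, PlusIS x u v /\ PlusIS v y t /\ PlusIS u s t.

Definition PlusS x y s :=
  (isZ x /\ s = y) \/ ((isZ y /\ s = x) \/ ((isZ s /\ NegS x y) \/
  (~ isZ x /\ (~ isZ y /\ (~ isZ s /\ LargeS (ThetaS x y s)))))).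

Lemma Theta_correct x y s u : ~ isZ x -> ~ isZ y -> ~ isZ s -> nice u [:: x; y; s] ->
  (ThetaS x y s u <-> forall k, mval s k = mval x k + mval y k).
Proof.
move=> hx hy hs nu.
have ixu : ind2 x u by apply: (@nice_ind2 x u _ hx nu); left.
have isu : ind2 u s by apply: ind2_sym; apply: (@nice_ind2 s u _ hs nu); right; right; left.
have ivy : forall v, (forall k, mval v k = mval x k + mval u k) -> ind2 v y.
  move=> v Hv; apply: ind2_sym; apply: (@nice_ind2 y v [:: y] hy) => /=; last by left.
  case: nu => K [hK hP]; exists K; split; last by move=> p [<-|[]]; apply: hP; right; left.
  by rewrite Hv (hP x) ?add0r //; left.
split.
- move=> [v [t [h1 [h2 h3]]]].
  rewrite (@PlusI_correct x u v ixu) in h1.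
  rewrite (@PlusI_correct v y t (ivy v h1)) in h2.
  rewrite (@PlusI_correct u s t isu) in h3.
  move=> k; have := h3 k; rewrite h2 h1 => E.
  lra.
- move=> Hs.
  pose v := lcM 1 1 x u; pose t := lcM 1 1 v y.
  have Hv : forall k, mval v k = mval x k + mval u k by move=> k /=; ring.
  exists v, t; split; [|split].
  + by apply/(@PlusI_correct x u v ixu) => k /=; ring.
  + by apply/(@PlusI_correct v y t (ivy v Hv)) => k /=; ring.
  + by apply/(@PlusI_correct u s t isu) => k /=; rewrite Hs; ring.
Qed.

Lemma Plus_correct x y s : PlusS x y s <-> forall k, mval s k = mval x k + mval y k.
Proof.
split.
- case=> [[hx ->] k|[[hy ->] k|[[hs [[o [ho [e1 [e2 [h1 [h2 H]]]]]] hn]]|[hx [hy [hs HL]]]]]].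
  + by rewrite hx add0r.
  + by rewrite hy addr0.
  + case: h1 => E1; case: h2 => E2.
    * move=> k; move: (H k); rewrite ho hs E1 E2 !mul1r; done.
    * have exy : x = y.
        apply: M_ext => k; move: (H k); rewrite ho E1 E2 mul1r mulN1r => /eqP.
        by rewrite eq_sym subr_eq0 => /eqP.
      have zx : isZ x by apply: NNPP => nz; apply: hn.
      by move=> k; rewrite hs -exy zx addr0.
    * have exy : x = y.
        apply: M_ext => k; move: (H k); rewrite ho E1 E2 mul1r mulN1r => /eqP.
        by rewrite eq_sym addrC subr_eq0 => /eqP.
      have zx : isZ x by apply: NNPP => nz; apply: hn.
      by move=> k; rewrite hs -exy zx addr0.
    * move=> k; move: (H k); rewrite ho hs E1 E2 !mulN1r => /eqP.
      by rewrite eq_sym -opprD oppr_eq0 => /eqP.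
  + apply: NNPP => hn; apply: (@large2 [:: x; y; s] (ThetaS x y s)) => // u nu.
    by rewrite Theta_correct.
- move=> Hs.
  case: (classic (isZ x)) => hx.
    left; split=> //; apply: M_ext => k; by rewrite Hs hx add0r.
  right; case: (classic (isZ y)) => hy.
    left; split=> //; apply: M_ext => k; by rewrite Hs hy addr0.
  right; case: (classic (isZ s)) => hs.
    left; split=> //; split.
    + exists zeroM; split=> //; exists 1, 1; split; [left|split; [left|move=> k /=]]=> //.
      by rewrite !mul1r -Hs hs.
    + move=> [exy _]; apply: hx => k.
      have := hs k; rewrite Hs -exy => /eqP; rewrite -mulr2n -mulr_natr mulf_eq0 /=.
      by case/orP => /eqP.
  right; do 3!(split=> //).
  apply: (@large1 [:: x; y; s]) => u nu; by rewrite Theta_correct.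
Qed.
Lemma fRE' env l z : size l = m.+2 -> (hl env (fR l z) <-> Rl (map env l) (env z)).
Proof.
move=> hs; rewrite fRE /Rl.
have -> : (fun j : 'I_m.+3 => env (nth 0%N (rcons l z) j)) =
          (fun j : 'I_m.+3 => nth zeroM (rcons (map env l) (env z)) j).
  apply: functional_extensionality => j.
  by rewrite -map_rcons (nth_map 0%N) // size_rcons hs.
done.
Qed.

Ltac upds := rewrite /upd; repeat (case: eqP => [?|?]); try done; try (exfalso; lia).

Definition fBody (x y s : nat) (acc : seq nat) (g : nat) : F :=
 FEx g (FEx g.+1 (FEx g.+2 (FEx g.+3 (FEx g.+4 (
   FAnd (fSc A1 B1 g.+4.+1 y g) (FAnd (fSc A1 B1 g.+4.+1 x g.+1)
   (FAnd (fR (x :: g :: acc) g.+2) (FAnd (fR (y :: g.+1 :: acc) g.+2)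
   (FAnd (fR (x :: g :: acc) g.+3) (FAnd (fR (y :: g.+1 :: acc) g.+3)
   (FAnd (fPm g.+2 g.+3 g.+4) (fSc A2 B2 g.+4.+1 g.+4 s)))))))))))).

Lemma fBodyE env x y s acc g : (x < g)%N -> (y < g)%N -> (s < g)%N -> size acc = m ->
  (forall a, a \in acc -> (a < g)%N) ->
  (hl env (fBody x y s acc g) <-> BS (env x) (env y) (env s) (map env acc)).
Proof.
move=> hx hy hs hsz ha.
have E : forall b w z1 z2 t,
  let e5 := upd (upd (upd (upd (upd env g b) g.+1 w) g.+2 z1) g.+3 z2) g.+4 t in
  (hl e5 (fSc A1 B1 g.+4.+1 y g) /\ (hl e5 (fSc A1 B1 g.+4.+1 x g.+1) /\
   (hl e5 (fR (x :: g :: acc) g.+2) /\ (hl e5 (fR (y :: g.+1 :: acc) g.+2) /\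
   (hl e5 (fR (x :: g :: acc) g.+3) /\ (hl e5 (fR (y :: g.+1 :: acc) g.+3) /\
   (hl e5 (fPm g.+2 g.+3 g.+4) /\ hl e5 (fSc A2 B2 g.+4.+1 g.+4 s))))))))
  <-> (scS (B1%:R / A1%:R) (env y) b /\ scS (B1%:R / A1%:R) (env x) w /\
  Rl (env x :: b :: map env acc) z1 /\ Rl (env y :: w :: map env acc) z1 /\
  Rl (env x :: b :: map env acc) z2 /\ Rl (env y :: w :: map env acc) z2 /\
  pmR z1 z2 t /\ scS (B2%:R / A2%:R) t (env s)).
  move=> b w z1 z2 t e5.
  have ev : forall a, (a < g)%N -> e5 a = env a by move=> a h; rewrite /e5; upds.
  have eb : e5 g = b by rewrite /e5; upds.
  have ew : e5 g.+1 = w by rewrite /e5; upds.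
  have ez1 : e5 g.+2 = z1 by rewrite /e5; upds.
  have ez2 : e5 g.+3 = z2 by rewrite /e5; upds.
  have et : e5 g.+4 = t by rewrite /e5; upds.
  have em : map e5 acc = map env acc by apply/eq_in_map => a /ha; exact: ev.
  have sz : forall a c, size [:: a, c & acc] = m.+2 by move=> a c; rewrite /= hsz.
  rewrite !fScE ?fPmE ?fRE' ?sz //= ?em ?eb ?ew ?ez1 ?ez2 ?et ?(ev x) ?(ev y) ?(ev s) //; lia.
split.
- move=> [b [w [z1 [z2 [t H]]]]]; exists b, w, z1, z2, t; exact/E.
- move=> [b [w [z1 [z2 [t H]]]]]; exists b, w, z1, z2, t; exact/E.
Qed.
Definition fEq (x y : nat) : F := @FEq _ (RS_ar m.+2) x y.

Definition fPM2 (x y s f : nat) : F :=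
  FAnd (FNot (fZero s)) (fLN m f (fun acc g => fBody x y s acc g) [::]).

Lemma fPM2E env x y s f : (x < f)%N -> (y < f)%N -> (s < f)%N ->
  (hl env (fPM2 x y s f) <-> PM2S (env x) (env y) (env s)).
Proof.
move=> hx hy hs.
have E : hl env (fLN m f (fun acc g => fBody x y s acc g) [::]) <-> LNS m (BS (env x) (env y) (env s)) [::].
  apply: (@fLNE (BS (env x) (env y) (env s)) f env _ m) => //.
  move=> acc g env' hsz ha hg agr.
  rewrite fBodyE //; try (apply: (leq_trans _ hg); done).
  by rewrite !agr.
change ((~ hl env (fZero s)) /\ hl env (fLN m f (fun acc g => fBody x y s acc g) [::]) <-> PM2S (env x) (env y) (env s)).
by rewrite fZeroE E.
Qed.

Definition fPlusI (x y s f : nat) : F := FAnd (fPM2 x y s f) (FNot (fPM2 s x y f)).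
Lemma fPlusIE env x y s f : (x < f)%N -> (y < f)%N -> (s < f)%N ->
  (hl env (fPlusI x y s f) <-> PlusIS (env x) (env y) (env s)).
Proof.
move=> hx hy hs; change (hl env (fPM2 x y s f) /\ ~ hl env (fPM2 s x y f) <-> PlusIS (env x) (env y) (env s)).
by rewrite !fPM2E.
Qed.

Definition fNeg (x y f : nat) : F :=
  FAnd (FEx f (FAnd (fZero f) (fPm x y f))) (FNot (FAnd (fEq x y) (FNot (fZero x)))).
Lemma fNegE env x y f : (x < f)%N -> (y < f)%N -> (hl env (fNeg x y f) <-> NegS (env x) (env y)).
Proof.
move=> hx hy.
have E : forall d, hl (upd env f d) (fZero f) /\ hl (upd env f d) (fPm x y f) <-> isZ d /\ pmR (env x) (env y) d.
  by move=> d; rewrite fZeroE fPmE upd_eq !upd_lt.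
change ((exists d, hl (upd env f d) (fZero f) /\ hl (upd env f d) (fPm x y f)) /\
   ~ (env x = env y /\ ~ hl env (fZero x)) <-> NegS (env x) (env y)).
rewrite fZeroE; split; move=> [[d Hd] H2]; split=> //; exists d; exact/E.
Qed.

Definition fTheta (x y s u g : nat) : F :=
  FEx g (FEx g.+1 (FAnd (fPlusI x u g g.+2) (FAnd (fPlusI g y g.+1 g.+2) (fPlusI u s g.+1 g.+2)))).
Lemma fThetaE env x y s u g : (x < g)%N -> (y < g)%N -> (s < g)%N -> (u < g)%N ->
  (hl env (fTheta x y s u g) <-> ThetaS (env x) (env y) (env s) (env u)).
Proof.
move=> hx hy hs hu.
have E : forall v t, let e2 := upd (upd env g v) g.+1 t in
  (hl e2 (fPlusI x u g g.+2) /\ (hl e2 (fPlusI g y g.+1 g.+2) /\ hl e2 (fPlusI u s g.+1 g.+2)))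
  <-> (PlusIS (env x) (env u) v /\ PlusIS v (env y) t /\ PlusIS (env u) (env s) t).
  move=> v t e2.
  have ev : forall a, (a < g)%N -> e2 a = env a by move=> a h; rewrite /e2; upds.
  have e0 : e2 g = v by rewrite /e2; upds.
  have e1 : e2 g.+1 = t by rewrite /e2; upds.
  rewrite !fPlusIE ?e0 ?e1 ?(ev x) ?(ev y) ?(ev s) ?(ev u) //; lia.
split; move=> [v [t H]]; exists v, t; exact/E.
Qed.

Definition fPlus (x y s f : nat) : F :=
  fOr (FAnd (fZero x) (fEq s y)) (fOr (FAnd (fZero y) (fEq s x)) (fOr (FAnd (fZero s) (fNeg x y f))
   (FAnd (FNot (fZero x)) (FAnd (FNot (fZero y)) (FAnd (FNot (fZero s))
     (fLarge f (fun u g => fTheta x y s u g))))))).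

Lemma fPlusE env x y s f : (x < f)%N -> (y < f)%N -> (s < f)%N ->
  (hl env (fPlus x y s f) <-> PlusS (env x) (env y) (env s)).
Proof.
move=> hx hy hs.
have EL : hl env (fLarge f (fun u g => fTheta x y s u g)) <-> LargeS (ThetaS (env x) (env y) (env s)).
  apply: fLargeE => e he env' agr.
  have lte : (e < f.+3)%N by case: he => ->; lia.
  rewrite fThetaE ?(agr x) ?(agr y) ?(agr s) //; lia.
rewrite /fPlus !fOrE /PlusS.
change ((hl env (fZero x) /\ env s = env y) \/ ((hl env (fZero y) /\ env s = env x) \/
   ((hl env (fZero s) /\ hl env (fNeg x y f)) \/
    (~ hl env (fZero x) /\ (~ hl env (fZero y) /\ (~ hl env (fZero s) /\
      hl env (fLarge f (fun u g => fTheta x y s u g))))))) <->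
   (isZ (env x) /\ env s = env y) \/ ((isZ (env y) /\ env s = env x) \/ ((isZ (env s) /\ NegS (env x) (env y)) \/
   (~ isZ (env x) /\ (~ isZ (env y) /\ (~ isZ (env s) /\ LargeS (ThetaS (env x) (env y) (env s)))))))).
by rewrite !fZeroE fNegE // EL.
Qed.
Lemma final_def : definable (RS_I R) plus_rel.
Proof.
exists (fPlus 0 1 2 3) => env.
rewrite fPlusE // Plus_correct /plus_rel /plusR /= !inordK //.
Qed.
End Core.

Theorem mainTheorem18 (n : nat) (hn : (2 <= n)%N) (r : 'I_n -> rat)
  (hr : forall i, r i != 0) (R : ('I_n.+1 -> M) -> Prop)
  (hRdef : definable_plus R)
  (hR : forall a : 'I_n -> M, lin_indep a -> forall z : M,
      R (snoc_tuple a z) <->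
      exists s : 'I_n -> rat,
        (forall i : 'I_n, (0 < val i)%N -> s i = 1 \/ s i = -1) /\
        forall k, mval z k =
          \sum_(i < n) (if val i == 0%N then 1 else s i) * r i * mval (a i) k) :
  definable (RS_I R) plus_rel.
Proof.
case: n hn r hr R hRdef hR => [|[|m]] // _ r hr R _ hR.
have [A1 [B1 [hA1 hc1]]] := rat_frac (@pp m r / @qq m r).
have [A2 [B2 [hA2 hc2]]] := rat_frac (1 / (2 * @pp m r)).
exact: (@final_def m r hr R hR A1 B1 A2 B2 hA1 hA2 hc1 hc2).
Qed.
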